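(* (i) For every pair of distortion functions $(\rho_-,\rho_+)$ there exists a decay family $\Gamma$ such that for every $R\in[0,\infty]$, every metric space with property $K(\rho_-,\rho_+,R)$ has property $k(\Gamma,R)$. (ii) For every decay family $\Gamma$ there exists a pair of distortion functions $(\rho_-,\rho_+)$ such that for every $R\in[0,\infty]$, every metric space with property $k(\Gamma,R)$ has property $K(\rho_-,\rho_+,R)$.
   Context: A distortion function is a non-decreasing proper function $[0,\infty)\to[0,\infty)$. A decay function is a bounded non-increasing function $\gamma:[0,\infty)\to[0,\infty)$ tending to zero at infinity; a decay family is a collection $\Gamma=\{\gamma_{r,\delta}\}$ of decay functions indexed by $(r,\delta)\in[0,\infty)\times(0,1]$. A kernel $K:Y\times Y\to\mathbb{R}_+$ is negative type if $\sum_{i,j}z_i\overline{z_j}K(y_i,y_j)\le0$ for all finite $\{y_1,\dots,y_m\}\subseteq Y$ and $z_i\in\mathbb{C}$ with $\sum z_i=0$; a kernel $k$ is positive type if $\sum_{i,j}z_i\overline{z_j}k(y_i,y_j)\ge0$ for all finite $\{y_i\}\subseteq Y$ and all $z_i\in\mathbb{C}$. A metric space $Y$ has property $K(\rho_-,\rho_+,R)$ ($R\in[0,\infty]$) if there is a kernel $K:Y\times Y\to\mathbb{R}_+$ with $K(x,x)=0$, $K(x,y)=K(y,x)$, $\rho_-(d(x,y))\le K(x,y)\le\rho_+(d(x,y))$, and whose restriction to $E\times E$ is negative type for each $E\subseteq Y$ of diameter at most $R$. $Y$ has property $k(\Gamma,R)$ if for every $(r,\delta)\in[0,\infty)\times(0,1]$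 there is a kernel $k:Y\times Y\to[0,1]$ with $k(x,x)=1$, $k(x,y)=k(y,x)$, $1-k(x,y)<\delta$ whenever $d(x,y)\le r$, $k(x,y)\le\gamma_{r,\delta}(d(x,y))$ for all $x,y$, and whose restriction to $E\times E$ is positive type for each $E\subseteq Y$ of diameter at most $R$. *)

(* Defs.v *)
From HB Require Import structures.
From mathcomp Require Import all_boot all_order all_algebra.
From mathcomp Require Import all_classical all_reals.
From mathcomp Require Import ereal Rstruct.
From mathcomp Require Import complex.
From Stdlib Require Import Reals.
Set Implicit Arguments. Unset Strict Implicit. Unset Printing Implicit Defensive.
Import Order.TTheory GRing.Theory Num.Theory.
Local Open Scope ring_scope.
Local Open Scope complex_scope.

Notation RR := Rdefinitions.R.
Notation CC := (RR[i]).

(** Functions [0,oo) -> [0,oo) are represented by functions RR -> RR,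
    of which only the values on [0,oo) matter. *)

Definition distortion (rho : RR -> RR) : Prop :=
  (forall t, 0 <= t -> 0 <= rho t) /\
  (forall s t, 0 <= s -> s <= t -> rho s <= rho t) /\
  (forall M : RR, exists N : RR, forall t, 0 <= t -> rho t <= M -> t <= N).

Definition decay (g : RR -> RR) : Prop :=
  (forall t, 0 <= t -> 0 <= g t) /\
  (exists B : RR, forall t, 0 <= t -> g t <= B) /\
  (forall s t, 0 <= s -> s <= t -> g t <= g s) /\
  (forall eps : RR, 0 < eps -> exists T : RR, forall t, T <= t -> g t < eps).

Definition decay_family (G : RR -> RR -> RR -> RR) : Prop :=
  forall r delta, 0 <= r -> 0 < delta -> delta <= 1 -> decay (G r delta).

Record metricSpace := MetricSpace {
  mcarrier :> Type;
  mdist : mcarrier -> mcarrier -> RR;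
  mdist_ge0 : forall x y, 0 <= mdist x y;
  mdist_eq0 : forall x y, mdist x y = 0 <-> x = y;
  mdist_sym : forall x y, mdist x y = mdist y x;
  mdist_tri : forall x y z, mdist x z <= mdist x y + mdist y z }.

Definition diam_le (Y : metricSpace) (E : set Y) (Rb : \bar RR) : Prop :=
  forall x y, E x -> E y -> ((mdist x y)%:E <= Rb)%E.

Definition neg_type_on (Y : Type) (K : Y -> Y -> RR) (E : set Y) : Prop :=
  forall (m : nat) (y : 'I_m -> Y) (z : 'I_m -> CC),
    (forall i, E (y i)) -> \sum_(i < m) z i = 0 ->
    \sum_(i < m) \sum_(j < m) z i * (z j)^* * (K (y i) (y j))%:C <= 0.

Definition pos_type_on (Y : Type) (k : Y -> Y -> RR) (E : set Y) : Prop :=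
  forall (m : nat) (y : 'I_m -> Y) (z : 'I_m -> CC),
    (forall i, E (y i)) ->
    0 <= \sum_(i < m) \sum_(j < m) z i * (z j)^* * (k (y i) (y j))%:C.

Definition propK (Y : metricSpace) (rhom rhop : RR -> RR) (Rb : \bar RR) : Prop :=
  exists K : Y -> Y -> RR,
    (forall x y, 0 <= K x y) /\
    (forall x, K x x = 0) /\
    (forall x y, K x y = K y x) /\
    (forall x y, rhom (mdist x y) <= K x y /\ K x y <= rhop (mdist x y)) /\
    (forall E : set Y, diam_le E Rb -> neg_type_on K E).

Definition propk (Y : metricSpace) (G : RR -> RR -> RR -> RR) (Rb : \bar RR) : Prop :=
  forall r delta, 0 <= r -> 0 < delta -> delta <= 1 ->
  exists k : Y -> Y -> RR,
    (forall x y, 0 <= k x y /\ k x y <= 1) /\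
    (forall x, k x x = 1) /\
    (forall x y, k x y = k y x) /\
    (forall x y, mdist x y <= r -> 1 - k x y < delta) /\
    (forall x y, k x y <= G r delta (mdist x y)) /\
    (forall E : set Y, diam_le E Rb -> pos_type_on k E).

(* Main.v *)
Require Import Defs.
From mathcomp Require Import all_boot all_order all_algebra.
From mathcomp Require Import all_classical all_reals.
From mathcomp Require Import ereal Rstruct.
From mathcomp Require Import all_analysis.
From mathcomp Require Import Rstruct complex.
From mathcomp Require Import Rstruct_topology.
From mathcomp Require Import ring lra.
Import Order.TTheory GRing.Theory Num.Theory.
Import numFieldNormedType.Exports.
Local Open Scope ring_scope.
Local Open Scope classical_set_scope.
Set Implicit Arguments. Unset Strict Implicit. Unset Printing Implicit Defensive.

Section QF.
Variable R : realType.

Definition Bf m (M : 'I_m -> 'I_m -> R) (x y : 'I_m -> R) :=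
  \sum_i \sum_j x i * y j * M i j.
Definition Qf m (M : 'I_m -> 'I_m -> R) x := Bf M x x.
Definition psd m (M : 'I_m -> 'I_m -> R) := forall x, 0 <= Qf M x.
Definition symm m (M : 'I_m -> 'I_m -> R) := forall i j, M i j = M j i.
Definition ev m (p : 'I_m) : 'I_m -> R := fun i => (i == p)%:R.

Lemma BfDl m M (x y z : 'I_m -> R) :
  Bf M (fun i => x i + y i) z = Bf M x z + Bf M y z.
Proof.
rewrite /Bf -big_split /=; apply: eq_bigr => i _.
rewrite -big_split /=; apply: eq_bigr => j _; ring.
Qed.

Lemma BfDr m M (x y z : 'I_m -> R) :
  Bf M z (fun i => x i + y i) = Bf M z x + Bf M z y.
Proof.
rewrite /Bf -big_split /=; apply: eq_bigr => i _.
rewrite -big_split /=; apply: eq_bigr => j _; ring.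
Qed.

Lemma BfZl m M (x z : 'I_m -> R) c :
  Bf M (fun i => c * x i) z = c * Bf M x z.
Proof.
rewrite /Bf mulr_sumr; apply: eq_bigr => i _.
rewrite mulr_sumr; apply: eq_bigr => j _; ring.
Qed.

Lemma BfZr m M (x z : 'I_m -> R) c :
  Bf M z (fun i => c * x i) = c * Bf M z x.
Proof.
rewrite /Bf mulr_sumr; apply: eq_bigr => i _.
rewrite mulr_sumr; apply: eq_bigr => j _; ring.
Qed.

Lemma sum_ev m (p : 'I_m) (F : 'I_m -> R) : \sum_j ev p j * F j = F p.
Proof.
rewrite (bigD1 p) //= /ev eqxx mul1r big1 ?addr0 // => j /negbTE ->.
by rewrite mul0r.
Qed.

Lemma Bf_evr m M (x : 'I_m -> R) p : Bf M x (ev p) = \sum_i x i * M i p.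
Proof.
apply: eq_bigr => i _.
under eq_bigr do rewrite (mulrC (x i)) -mulrA.
by rewrite (sum_ev p (fun j => x i * M i j)).
Qed.

Lemma Bf_evl m M (x : 'I_m -> R) p : Bf M (ev p) x = \sum_j x j * M p j.
Proof.
rewrite /Bf exchange_big /=.
apply: eq_bigr => j _.
under eq_bigr do rewrite -mulrA.
by rewrite (sum_ev p (fun i => x j * M i j)).
Qed.

Lemma Bf_sym m M (x y : 'I_m -> R) : symm M -> Bf M x y = Bf M y x.
Proof.
move=> sM; rewrite /Bf exchange_big /=; apply: eq_bigr => i _.
apply: eq_bigr => j _; rewrite sM; ring.
Qed.

Lemma Qf_ev m M (p : 'I_m) : Qf M (ev p) = M p p.
Proof. by rewrite /Qf Bf_evr sum_ev. Qed.

Lemma Qf_shift m M (x : 'I_m -> R) p t : symm M ->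
  Qf M (fun i => x i + t * ev p i) =
  Qf M x + 2 * t * (\sum_i x i * M i p) + t ^+ 2 * M p p.
Proof.
move=> sM; rewrite /Qf BfDl !BfDr !BfZl !BfZr.
rewrite (Bf_sym (ev p) x sM) Bf_evr Bf_evr sum_ev.
ring.
Qed.


Lemma psd_diag0 m (M : 'I_m -> 'I_m -> R) p : psd M -> symm M -> M p p = 0 ->
  forall i, M i p = 0.
Proof.
move=> hM sM h0 i; apply/eqP/negP => nz.
have := hM (fun k => ev i k + (- (M i i + 1) / (2 * M i p)) * ev p k).
rewrite Qf_shift // h0 Qf_ev.
rewrite sum_ev expr2 !mulr0 addr0.
have -> : 2 * (- (M i i + 1) / (2 * M i p)) * M i p = - (M i i + 1).
  by field; apply/negP.
lra.
Qed.

Lemma psd_peel m (B : 'I_m -> 'I_m -> R) p : psd B -> symm B -> 0 < B p p ->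
  psd (fun i j => B i j - B i p * B j p / B p p).
Proof.
move=> hB sB bpos x.
set b := B p p; set s := \sum_i x i * B i p.
have E : Qf (fun i j => B i j - B i p * B j p / b) x = Qf B x - s * s / b.
  rewrite /Qf /Bf.
  transitivity (\sum_i \sum_j (x i * x j * B i j - (x i * B i p) * (x j * B j p) / b)).
    by apply: eq_bigr => i _; apply: eq_bigr => j _; rewrite /b; ring.
  under eq_bigr do rewrite sumrB.
  rewrite sumrB; congr (_ - _).
  rewrite /s mulr_suml mulr_suml; apply: eq_bigr => i _.
  by rewrite mulr_sumr mulr_suml.
have := hB (fun i => x i + (- s / b) * ev p i).
rewrite Qf_shift // -/b -/s E.
have bn0 : b != 0 by rewrite gt_eqF.
by have -> : Qf B x + 2 * (- s / b) * s + (- s / b) ^+ 2 * b = Qf B x - s * s / b by field.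
Qed.


Lemma hadamard_aux n : forall m (A B : 'I_m -> 'I_m -> R),
  psd A -> psd B -> symm B -> (forall i j : 'I_m, (n <= i)%N -> B i j = 0) ->
  psd (fun i j => A i j * B i j).
Proof.
elim: n => [|n IH] m A B pA pB sB hz.
  move=> x; rewrite /Qf /Bf big1 // => i _; rewrite big1 // => j _.
  by rewrite hz // !mulr0.
case: (ltnP n m) => [nm | mn]; last first.
  apply: IH => // i j ni; exfalso.
  by move: (ltn_ord i); rewrite ltnNge (leq_trans mn ni).
pose p : 'I_m := Ordinal nm.
case: (eqVneq (B p p) 0) => [b0 | bn0].
  apply: IH => // i j ni.
  case: (ltnP n i) => [lt | le]; first exact: hz.
  have ip : i = p by apply: val_inj => /=; apply/eqP; rewrite eqn_leq le ni.
  by rewrite ip sB (psd_diag0 pB sB b0).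
have bpos : 0 < B p p by rewrite lt_def bn0 -Qf_ev pB.
set B' := fun i j => B i j - B i p * B j p / B p p.
have pB' : psd B' by apply: psd_peel.
have sB' : symm B' by move=> i j; rewrite /B' (sB i j) [B i p * _]mulrC.
have hz' : forall i j : 'I_m, (n <= i)%N -> B' i j = 0.
  move=> i j ni; rewrite /B'.
  case: (ltnP n i) => [lt | le].
    by rewrite (hz i j lt) (hz i p lt) !mul0r subr0.
  have ip : i = p by apply: val_inj => /=; apply/eqP; rewrite eqn_leq le ni.
  rewrite ip (sB j p) mulrAC divff // mul1r; exact: subrr.
have h1 := IH m A B' pA pB' sB' hz'.
move=> x.
have -> : Qf (fun i j => A i j * B i j) x =
  Qf (fun i j => A i j * B' i j) x + Qf A (fun i => x i * B i p) / B p p.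
  rewrite /Qf /Bf mulr_suml -big_split; apply: eq_bigr => i _ /=.
  rewrite mulr_suml -big_split; apply: eq_bigr => j _ /=.
  by rewrite /B'; field.
apply: addr_ge0; first exact: h1.
by apply: divr_ge0; [exact: pA | exact: ltW].
Qed.

Lemma psd_hadamard m (A B : 'I_m -> 'I_m -> R) :
  psd A -> psd B -> symm B -> psd (fun i j => A i j * B i j).
Proof.
move=> pA pB sB; apply: (@hadamard_aux m) => // i j; rewrite leqNgt ltn_ord //.
Qed.

Lemma psd_one m : psd (fun i j : 'I_m => (1 : R)).
Proof.
move=> x; rewrite /Qf /Bf.
have -> : \sum_i \sum_j x i * x j * (1 : R) = (\sum_i x i) * (\sum_i x i).
  rewrite mulr_suml; apply: eq_bigr => i _; rewrite mulr_sumr.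
  by apply: eq_bigr => j _; rewrite mulr1.
by rewrite -expr2 sqr_ge0.
Qed.

Lemma psd_pow m (A : 'I_m -> 'I_m -> R) k : psd A -> symm A ->
  psd (fun i j => A i j ^+ k).
Proof.
move=> pA sA; elim: k => [|k IH].
  rewrite (_ : (fun i j => A i j ^+ 0) = fun _ _ => 1); first exact: psd_one.
  by apply/funext => i; apply/funext => j; rewrite expr0.
rewrite (_ : (fun i j => A i j ^+ k.+1) = fun i j => A i j * A i j ^+ k).
  by apply: psd_hadamard => // i j; rewrite sA.
by apply/funext => i; apply/funext => j; rewrite exprS.
Qed.

Lemma psd_scale m (A : 'I_m -> 'I_m -> R) u : psd A ->
  psd (fun i j => u i * u j * A i j).
Proof.
move=> pA x.
have -> : Qf (fun i j => u i * u j * A i j) x = Qf A (fun i => x i * u i).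
  by apply: eq_bigr => i _; apply: eq_bigr => j _; ring.
exact: pA.
Qed.


Lemma Qf_sum m (I : Type) (r : seq I) (F : I -> 'I_m -> 'I_m -> R) x :
  Qf (fun i j => \sum_(k <- r) F k i j) x = \sum_(k <- r) Qf (F k) x.
Proof.
rewrite /Qf /Bf.
under eq_bigr do under eq_bigr do rewrite mulr_sumr.
under eq_bigr do rewrite exchange_big.
by rewrite exchange_big.
Qed.

Lemma Qf_scale m (M : 'I_m -> 'I_m -> R) c x :
  Qf (fun i j => M i j * c) x = Qf M x * c.
Proof.
rewrite /Qf /Bf mulr_suml; apply: eq_bigr => i _.
by rewrite mulr_suml; apply: eq_bigr => j _; rewrite mulrA.
Qed.

Lemma Qf_cvg m (Ms : nat -> 'I_m -> 'I_m -> R) (M : 'I_m -> 'I_m -> R) (x : 'I_m -> R) :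
  (forall i j, Ms N i j @[N --> \oo] --> M i j) ->
  Qf (Ms N) x @[N --> \oo] --> Qf M x.
Proof.
move=> H; rewrite /Qf /Bf.
apply: cvg_big => // [|i _]; first exact: add_continuous.
apply: cvg_big => // [|j _]; first exact: add_continuous.
exact: cvgMl_tmp.
Qed.

Lemma lim_ge0 (f : nat -> R) (l : R) : f N @[N --> \oo] --> l -> (forall n, 0 <= f n) -> 0 <= l.
Proof.
move=> H h; rewrite -(cvg_lim _ H) //.
apply: limr_ge; first exact: (cvgP l H).
by apply: nearW.
Qed.

Lemma psd_exp m (A : 'I_m -> 'I_m -> R) : psd A -> symm A ->
  psd (fun i j => expR (A i j)).
Proof.
move=> pA sA x.
apply: (@lim_ge0 (fun N => Qf (fun i j => series (exp_coeff (A i j)) N) x)).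
  by apply: Qf_cvg => i j; exact: is_cvg_series_exp_coeff.
move=> N; rewrite /series /= Qf_sum.
apply: sumr_ge0 => k _.
rewrite /exp_coeff /= Qf_scale; apply: mulr_ge0; first exact: psd_pow.
by rewrite invr_ge0.
Qed.

Lemma lim_le0 (f : nat -> R) (l : R) : f N @[N --> \oo] --> l ->
  (forall n, f n <= 0) -> l <= 0.
Proof.
move=> H h.
have := @lim_ge0 (fun n => - f n) (- l) (cvgN H).
rewrite oppr_ge0; apply => n; rewrite oppr_ge0; exact: h.
Qed.


Lemma ndb_cvg (u : nat -> R) (B : R) : {homo u : n m / (n <= m)%N >-> n <= m} ->
  (forall N, u N <= B) -> u N @[N --> \oo] --> limn u.
Proof.
move=> hu hB; apply: nondecreasing_is_cvgn => //.
by exists B => _ [N _ <-].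
Qed.

Lemma ndb_ge (u : nat -> R) (B : R) : {homo u : n m / (n <= m)%N >-> n <= m} ->
  (forall N, u N <= B) -> forall N, u N <= limn u.
Proof.
move=> hu hB N; apply: nondecreasing_cvgn_le => //.
exact: (ndb_cvg hu hB).
Qed.

Lemma ndb_le (u : nat -> R) (B : R) : {homo u : n m / (n <= m)%N >-> n <= m} ->
  (forall N, u N <= B) -> limn u <= B.
Proof.
move=> hu hB; apply: limr_le; first exact: (ndb_cvg hu hB).
by apply: nearW.
Qed.

Lemma limn0 : limn (fun _ : nat => (0 : R)) = 0.
Proof. by rewrite lim_cst. Qed.

End QF.
Arguments ev {R m} p _.

Local Open Scope complex_scope.
Local Notation cRe := complex.Re.
Local Notation cIm := complex.Im.

Lemma Re_sum I (r : seq I) (F : I -> CC) : cRe (\sum_(i <- r) F i) = \sum_(i <- r) cRe (F i).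
Proof. by rewrite raddf_sum. Qed.
Lemma Im_sum I (r : seq I) (F : I -> CC) : cIm (\sum_(i <- r) F i) = \sum_(i <- r) cIm (F i).
Proof. by rewrite raddf_sum. Qed.

Lemma Re_term (z w : CC) (c : RR) : cRe (z * w^* * c%:C) = (cRe z * cRe w + cIm z * cIm w) * c.
Proof. case: z => a b; case: w => a1 b1 /=. ring. Qed.

Lemma Im_term (z w : CC) (c : RR) : cIm (z * w^* * c%:C) = (cIm z * cRe w - cRe z * cIm w) * c.
Proof. case: z => a b; case: w => a1 b1 /=. ring. Qed.

Lemma cform m (M : 'I_m -> 'I_m -> RR) (z : 'I_m -> CC) : symm M ->
  \sum_i \sum_j z i * (z j)^* * (M i j)%:C =
  (Qf M (fun i => cRe (z i)) + Qf M (fun i => cIm (z i)))%:C.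
Proof.
move=> sM; apply/eqP; rewrite eq_complex /=; apply/andP; split; apply/eqP.
  rewrite Re_sum /Qf /Bf -big_split; apply: eq_bigr => i _ /=.
  rewrite Re_sum -big_split; apply: eq_bigr => j _ /=.
  by rewrite Re_term; ring.
rewrite Im_sum.
transitivity (Bf M (fun i => cIm (z i)) (fun i => cRe (z i)) -
              Bf M (fun i => cRe (z i)) (fun i => cIm (z i))).
  rewrite /Bf -sumrB; apply: eq_bigr => i _ /=.
  rewrite Im_sum -sumrB; apply: eq_bigr => j _ /=.
  by rewrite Im_term; ring.
by rewrite (Bf_sym _ _ sM) subrr.
Qed.

Lemma Qf0 m (M : 'I_m -> 'I_m -> RR) : Qf M (fun _ => 0) = 0.
Proof. by rewrite /Qf /Bf big1 // => i _; rewrite big1 // => j _; rewrite !mul0r. Qed.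

Lemma pos_of_psd (Y : Type) (k : Y -> Y -> RR) (E : set Y) :
  (forall x y, k x y = k y x) ->
  (forall m (y : 'I_m -> Y), (forall i, E (y i)) -> psd (fun i j => k (y i) (y j))) ->
  pos_type_on k E.
Proof.
move=> sk H m y z Ey.
rewrite (cform (M := fun i j => k (y i) (y j))); last by move=> i j; apply: sk.
by rewrite ler0c; apply: addr_ge0; apply: H.
Qed.

Lemma psd_of_pos (Y : Type) (k : Y -> Y -> RR) (E : set Y) m (y : 'I_m -> Y) :
  (forall x y, k x y = k y x) -> pos_type_on k E -> (forall i, E (y i)) ->
  psd (fun i j => k (y i) (y j)).
Proof.
move=> sk H Ey x; have := H m y (fun i => (x i)%:C) Ey.
rewrite (cform (M := fun i j => k (y i) (y j))); last by move=> i j; apply: sk.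
by rewrite ler0c /= Qf0 addr0.
Qed.

Lemma neg_real (Y : Type) (K : Y -> Y -> RR) (E : set Y) m (y : 'I_m -> Y) :
  (forall x y, K x y = K y x) -> neg_type_on K E -> (forall i, E (y i)) ->
  forall a, \sum_i a i = 0 -> Qf (fun i j => K (y i) (y j)) a <= 0.
Proof.
move=> sK H Ey a ha.
have hz : \sum_i (a i)%:C = 0.
  by apply/eqP; rewrite eq_complex Re_sum Im_sum /= ha big1 // eqxx.
have := H m y (fun i => (a i)%:C) Ey hz.
rewrite (cform (M := fun i j => K (y i) (y j))); last by move=> i j; apply: sK.
by rewrite /= Qf0 addr0 lecE /= => /andP[].
Qed.

Lemma neg_of_real (Y : Type) (K : Y -> Y -> RR) (E : set Y) :
  (forall x y, K x y = K y x) ->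
  (forall m (y : 'I_m -> Y), (forall i, E (y i)) ->
     forall a, \sum_i a i = 0 -> Qf (fun i j => K (y i) (y j)) a <= 0) ->
  neg_type_on K E.
Proof.
move=> sK H m y z Ey hz.
rewrite (cform (M := fun i j => K (y i) (y j))); last by move=> i j; apply: sK.
have h1 : \sum_i cRe (z i) = 0 by rewrite -Re_sum hz.
have h2 : \sum_i cIm (z i) = 0 by rewrite -Im_sum hz.
have := H m y Ey _ h1; have := H m y Ey _ h2.
rewrite lecE /= eqxx /=; lra.
Qed.

Lemma sum_ev1 m (p : 'I_m) : \sum_i ev p i = 1 :> RR.
Proof.
rewrite (eq_bigr (fun j => ev p j * (fun _ => (1 : RR)) j)); first exact: sum_ev.
by move=> j _; rewrite mulr1.
Qed.

Lemma exp_kernel_psd (Y : Type) (K : Y -> Y -> RR) (E : set Y) (t : RR) m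
  (y : 'I_m -> Y) :
  (forall x y, K x y = K y x) -> (forall x, K x x = 0) -> neg_type_on K E ->
  (forall i, E (y i)) -> 0 <= t ->
  psd (fun i j => expR (- t * K (y i) (y j))).
Proof.
move=> sK K0 H Ey t0.
case: m y Ey => [|m] y Ey.
  by move=> x; rewrite /Qf /Bf big_ord0.
pose p : 'I_m.+1 := ord0.
pose b := y p.
pose A0 := fun i j => K (y i) b + K (y j) b - K (y i) (y j).
have sKy : symm (fun i j => K (y i) (y j)) by move=> i j; apply: sK.
have pA0 : psd A0.
  move=> x.
  pose S := \sum_i x i.
  pose c := \sum_i x i * K (y i) b.
  have hz : \sum_i (x i + (- S) * ev p i) = 0.
    by rewrite big_split /= -mulr_sumr sum_ev1 mulr1 subrr.
  have hQ := neg_real sK H Ey hz.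
  rewrite (Qf_shift (M := fun i j => K (y i) (y j))) // K0 mulr0 addr0 in hQ.
  have -> : Qf A0 x = 2 * (S * c) - Qf (fun i j => K (y i) (y j)) x.
    rewrite /Qf /Bf.
    transitivity (\sum_i \sum_j (x i * K (y i) b * x j + x i * (x j * K (y j) b)
                                   - x i * x j * K (y i) (y j))).
      by apply: eq_bigr => i _; apply: eq_bigr => j _; rewrite /A0; ring.
    under eq_bigr do rewrite sumrB big_split /= -mulr_sumr -mulr_sumr.
    rewrite sumrB big_split /= -!mulr_suml.
    rewrite -/S -/c; ring.
  rewrite -/c in hQ; lra.
have sA0 : symm A0 by move=> i j; rewrite /A0 (sK (y i) (y j)); ring.
pose u i := expR (- t * K (y i) b).
rewrite (_ : (fun i j => expR (- t * K (y i) (y j))) =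
             fun i j => u i * u j * expR (A0 i j * t)).
  apply: psd_scale; apply: (psd_exp (A := fun i j => A0 i j * t)).
    by move=> x; rewrite Qf_scale; apply: mulr_ge0.
  by move=> i j; rewrite sA0.
apply/funext => i; apply/funext => j.
have e (a c : RR) : expR a * expR c = expR (a + c) by rewrite exp.expRD.
rewrite /u !e; congr expR; rewrite /A0; ring.
Qed.

Lemma partI (rhom rhop : RR -> RR) : distortion rhom -> distortion rhop ->
  exists G : RR -> RR -> RR -> RR, decay_family G /\
    forall (Rb : \bar RR), (0 <= Rb)%E ->
    forall Y : metricSpace, propK Y rhom rhop Rb -> propk Y G Rb.
Proof.
move=> [m0 [mmono mprop]] [p0 [pmono pprop]].
pose tt (r delta : RR) := delta / (2 * (1 + rhop r)).
have tt_gt0 r delta : 0 <= r -> 0 < delta -> 0 < tt r delta.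
  move=> r0 d0; rewrite /tt divr_gt0 //; have := p0 r r0; lra.
exists (fun r delta s => expR (- tt r delta * rhom s)); split.
  move=> r delta r0 d0 d1; have tp := tt_gt0 r delta r0 d0.
  split; first by move=> t _; exact: expR_ge0.
  split.
    exists 1 => t t0; rewrite expR_le1.
    have := m0 t t0; nra.
  split.
    move=> s t s0 st; rewrite ler_expR.
    have := mmono s t s0 st; nra.
  move=> eps eps0.
  have [N hN] := mprop ((eps * tt r delta)^-1).
  exists (Num.max 0 N + 1) => s hs.
  have hmx0 := le_max 0 0 N; have hmxN := le_max N 0 N.
  rewrite lexx /= in hmx0; rewrite lexx orbT in hmxN.
  have s0 : 0 <= s by lra.
  have hM : (eps * tt r delta)^-1 < rhom s.
    rewrite ltNge; apply/negP => /(hN s s0); lra.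
  set y := tt r delta * rhom s.
  have hy : eps^-1 < y.
    have -> : eps^-1 = tt r delta * (eps * tt r delta)^-1.
      by field; apply/andP; split; rewrite gt_eqF.
    by rewrite /y ltr_pM2l.
  have hey : eps^-1 < expR y by have := expR_ge1Dx y; lra.
  rewrite mulNr expRN -/y invf_plt ?posrE ?expR_gt0 //.
move=> Rb _ Y [K [K0 [Kxx [Ksym [Kb Kneg]]]]] r delta r0 d0 d1.
have tp := tt_gt0 r delta r0 d0.
exists (fun x y => expR (- tt r delta * K x y)).
split.
  move=> x y; split; first exact: expR_ge0.
  by rewrite expR_le1; have := K0 x y; nra.
split; first by move=> x; rewrite Kxx mulr0 exp.expR0.
split; first by move=> x y; rewrite Ksym.
split.
  move=> x y hd.
  have h1 := expR_ge1Dx (- tt r delta * K x y).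
  have [_ hK] := Kb x y.
  have hp := pmono _ _ (Defs.mdist_ge0 x y) hd.
  have hpr := p0 r r0.
  have q : tt r delta * rhop r < delta.
    rewrite /tt mulrAC ltr_pdivrMr; last lra.
    nra.
  nra.
split.
  move=> x y; rewrite ler_expR; have [hm _] := Kb x y; nra.
move=> E hE; apply: pos_of_psd; first by move=> x y; rewrite Ksym.
move=> m y Ey; apply: (exp_kernel_psd (E := E)) => //; last exact: ltW.
exact: Kneg.
Qed.

Lemma max0_le (a b : RR) : a <= b -> Num.max 0 a <= Num.max 0 b.
Proof. by move=> ab; rewrite ge_max !le_max lexx ab orbT. Qed.

Lemma count_le (d : RR) N : 0 <= d ->
  \sum_(0 <= n < N) (((n%:R : RR) < d)%R%:R : RR) <= N%:R /\
  \sum_(0 <= n < N) (((n%:R : RR) < d)%R%:R : RR) <= d + 1.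
Proof.
move=> d0; elim: N => [|N [IH1 IH2]].
  by rewrite big_geq //; split => //; lra.
rewrite big_nat_recr //= -addn1 natrD.
case: (ltP (N%:R) d) => hN /=; split; lra.
Qed.

Lemma geom_sum N : \sum_(0 <= n < N) ((2^-1 : RR) ^+ n) = 2 - 2 * (2^-1) ^+ N.
Proof.
elim: N => [|N IH]; first by rewrite big_geq // expr0; lra.
by rewrite big_nat_recr //= IH exprS; field.
Qed.

Lemma geom_le N : \sum_(0 <= n < N) ((2^-1 : RR) ^+ n) <= 2.
Proof.
rewrite geom_sum; have : 0 <= (2^-1 : RR) ^+ N by apply: exprn_ge0; rewrite invr_ge0.
lra.
Qed.

Lemma Qf_ones m (a : 'I_m -> RR) : Qf (fun _ _ => 1) a = (\sum_i a i) ^+ 2.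
Proof.
rewrite /Qf /Bf expr2 mulr_suml; apply: eq_bigr => i _; rewrite mulr_sumr.
by apply: eq_bigr => j _; rewrite mulr1.
Qed.

Lemma Qf_1m m (M : 'I_m -> 'I_m -> RR) a :
  Qf (fun i j => 1 - M i j) a = Qf (fun _ _ => 1) a - Qf M a.
Proof.
rewrite /Qf /Bf -sumrB; apply: eq_bigr => i _; rewrite -sumrB.
by apply: eq_bigr => j _; ring.
Qed.

Lemma partII (G : RR -> RR -> RR -> RR) : decay_family G ->
  exists rhom rhop : RR -> RR, distortion rhom /\ distortion rhop /\
    forall (Rb : \bar RR), (0 <= Rb)%E ->
    forall Y : metricSpace, propk Y G Rb -> propK Y rhom rhop Rb.
Proof.
move=> HG.
pose h : RR := 2^-1.
have h0 : 0 < h by rewrite /h invr_gt0.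
have hh : h * 2 = 1 by rewrite /h; field.
have h1 : h <= 1 by lra.
pose dl n := h ^+ n.
have dl0 n : 0 < dl n by rewrite /dl exprn_gt0.
have dl1 n : dl n <= 1 by rewrite /dl exprn_ile1 // ltW.
pose g n t := G n%:R (dl n) t.
have gd n : decay (g n) := HG n%:R (dl n) (ler0n _ _) (dl0 n) (dl1 n).
pose rhom t := \sum_(0 <= n < Num.truncn t) Num.max 0 (1 - g n t).
exists rhom, (fun t => t + 3).
have mx0 (a : RR) : 0 <= Num.max 0 a by rewrite le_max lexx.
split.
  split; first by move=> t t0; apply: sumr_ge0 => n _; exact: mx0.
  split.
    move=> s t s0 st.
    have tst := le_truncn st.
    rewrite /rhom (big_cat_nat (leq0n _) tst) /=.
    have A : \sum_(0 <= n < Num.truncn s) Num.max 0 (1 - g n s) <=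
             \sum_(0 <= n < Num.truncn s) Num.max 0 (1 - g n t).
      apply: ler_sum => n _; apply: max0_le.
      have := (gd n).2.2.1 s t s0 st; lra.
    have B : 0 <= \sum_(Num.truncn s <= n < Num.truncn t) Num.max 0 (1 - g n t).
      by apply: sumr_ge0 => n _; exact: mx0.
    lra.
  move=> M.
  pose L := (Num.truncn (2 * Num.max 0 M)).+1.
  have HL : 2 * M < L%:R.
    have := truncnS_gt (2 * Num.max 0 M).
    have hm : M <= Num.max 0 M by rewrite le_max lexx orbT.
    rewrite /L; lra.
  have gen : forall l, exists T, forall n, (n < l)%N -> forall t, T <= t -> g n t < h.
    elim=> [|l [T hT]]; first by exists 0.
    have [T' hT'] := (gd l).2.2.2 h h0.
    exists (Num.max T T') => n nl t tT.
    have hT1 : T <= Num.max T T' by rewrite le_max lexx.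
    have hT2 : T' <= Num.max T T' by rewrite le_max lexx orbT.
    case: (ltnP n l) => [nl' | ln].
      by apply: (hT n nl' t); lra.
    have -> : n = l by apply/eqP; rewrite eqn_leq ln -ltnS nl.
    by apply: hT'; lra.
  have [T hT] := gen L.
  exists (Num.max T L%:R) => t t0 hM.
  case: (leP t (Num.max T L%:R)) => // hlt.
  exfalso.
  have hT1 : T <= Num.max T L%:R by rewrite le_max lexx.
  have hT2 : L%:R <= Num.max T L%:R by rewrite le_max lexx orbT.
  have Lt : (L <= Num.truncn t)%N by rewrite truncn_ge_nat //; lra.
  have : L%:R * h <= rhom t.
    rewrite /rhom (big_cat_nat (leq0n _) Lt) /=.
    have A : \sum_(0 <= n < L) h <= \sum_(0 <= n < L) Num.max 0 (1 - g n t).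
      apply: ler_sum_nat => n /andP[_ nL]; rewrite le_max; apply/orP; right.
      have := hT n nL t ltac:(lra); lra.
    rewrite sumr_const_nat subn0 -mulr_natr mulrC in A.
    have B : 0 <= \sum_(L <= n < Num.truncn t) Num.max 0 (1 - g n t).
      by apply: sumr_ge0 => n _; exact: mx0.
    lra.
  nra.
split.
  split; first by move=> t t0; lra.
  split; first by move=> s t _ st; lra.
  by move=> M; exists M => t _; lra.
move=> Rb _ Y Hk.
have [kk Hkk] := choice (fun n => Hk n%:R (dl n) (ler0n _ _) (dl0 n) (dl1 n)).
pose S (x y : Y) N := \sum_(0 <= n < N) (1 - kk n x y).
have k01 n x y : 0 <= kk n x y /\ kk n x y <= 1 := (Hkk n).1 x y.
have Smono x y : {homo S x y : a b / (a <= b)%N >-> a <= b}.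
  move=> a b ab; rewrite /S (big_cat_nat (leq0n _) ab) /=.
  have : 0 <= \sum_(a <= n < b) (1 - kk n x y).
    by apply: sumr_ge0 => n _; have := k01 n x y; lra.
  lra.
have Sbound x y N : S x y N <= Defs.mdist x y + 3.
  have d0 := Defs.mdist_ge0 x y.
  have : S x y N <= \sum_(0 <= n < N) ((((n%:R : RR) < Defs.mdist x y)%R)%:R + h ^+ n).
    apply: ler_sum => n _; have := k01 n x y; have := exprn_ge0 n (ltW h0).
    case: ltP => hn /=; rewrite ?mulr1n ?mulr0n.
      lra.
    have := (Hkk n).2.2.2.1 x y hn; rewrite /dl; lra.
  rewrite big_split /=.
  have [_ c2] := count_le N d0.
  have := geom_le N; rewrite -/h; lra.
pose K x y := limn (S x y).
have Kge x y N : S x y N <= K x y := ndb_ge (Smono x y) (Sbound x y) N.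
have Kle x y : K x y <= Defs.mdist x y + 3 := ndb_le (Smono x y) (Sbound x y).
have Kcvg x y := ndb_cvg (Smono x y) (Sbound x y).
exists K.
split.
  by move=> x y; have := Kge x y 0; rewrite /S big_geq.
split.
  move=> x; rewrite /K (_ : S x x = fun _ => 0) ?limn0 //.
  by apply/funext => N; rewrite /S big1 // => n _; rewrite (Hkk n).2.1 subrr.
split.
  move=> x y; rewrite /K (_ : S x y = S y x) //.
  by apply/funext => N; apply: eq_bigr => n _; rewrite (Hkk n).2.2.1.
split.
  move=> x y; split; last exact: Kle.
  apply: le_trans (Kge x y (Num.truncn (Defs.mdist x y))).
  rewrite /rhom /S; apply: ler_sum => n _.
  rewrite ge_max; apply/andP; split; first by have := k01 n x y; lra.
  by have := (Hkk n).2.2.2.2.1 x y; rewrite /g; lra.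
have symK : forall x y, K x y = K y x.
  move=> x y; rewrite /K (_ : S x y = S y x) //.
  by apply/funext => N; apply: eq_bigr => n _; rewrite (Hkk n).2.2.1.
move=> E hE; apply: neg_of_real => // m y Ey a ha.
apply: (lim_le0 (Qf_cvg (Ms := fun N i j => S (y i) (y j) N) _)).
  by move=> i j; exact: Kcvg.
move=> N /=.
rewrite /S (@Qf_sum _ _ _ _ (fun n i j => 1 - kk n (y i) (y j))).
apply: sumr_le0 => n _.
rewrite Qf_1m Qf_ones ha expr2 mulr0 sub0r oppr_le0.
apply: (psd_of_pos (E := E)) => //; last exact: (Hkk n).2.2.2.2.2 E hE.
by move=> x z; rewrite (Hkk n).2.2.1.
Qed.

Theorem lemma3p8 :
  (forall rhom rhop : RR -> RR, distortion rhom -> distortion rhop ->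
     exists G : RR -> RR -> RR -> RR, decay_family G /\
       forall (Rb : \bar RR), (0 <= Rb)%E ->
       forall Y : metricSpace, propK Y rhom rhop Rb -> propk Y G Rb) /\
  (forall G : RR -> RR -> RR -> RR, decay_family G ->
     exists rhom rhop : RR -> RR, distortion rhom /\ distortion rhop /\
       forall (Rb : \bar RR), (0 <= Rb)%E ->
       forall Y : metricSpace, propk Y G Rb -> propK Y rhom rhop Rb).
Proof.
split; [exact: partI | exact: partII].
Qed.
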